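(* Let $A_q$ be the set of polynomials $F\in\mathbb{Q}(q)[x]$ such that $F([n]_q)\in\mathbb{Z}[q,q^{-1}]$ for all integers $n\ge0$. For $k\ge0$ let $$B_k(x)=\frac{\prod_{j=1}^{k}\big([j]_q+q^jx\big)}{[k]!_q}.$$ Then the polynomials $B_k$, $k\ge0$, form a basis of $A_q$ as a module over $\mathbb{Z}[q,q^{-1}]$.
   Context: $q$ is an indeterminate; $[n]_q=(q^n-1)/(q-1)$ for $n\in\mathbb{Z}$ and $[k]!_q=[1]_q\cdots[k]_q$ (with $[0]!_q=1$). *)

(* Defs.v *)
From HB Require Import structures.
From mathcomp Require Import all_boot all_order all_algebra fraction.
Set Implicit Arguments. Unset Strict Implicit. Unset Printing Implicit Defensive.
Import Order.TTheory GRing.Theory Num.Theory.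
Local Open Scope ring_scope.

Definition Kq : fieldType := {fraction {poly rat}}.

Definition qq : Kq := tofrac ('X : {poly rat}).

Definition qnat (n : nat) : Kq := (qq ^+ n - 1) / (qq - 1).

Definition qfact (k : nat) : Kq := \prod_(j < k) qnat j.+1.

Definition laurent (r : Kq) : Prop :=
  exists (p : {poly int}) (m : nat),
    r = tofrac (map_poly (intr : int -> rat) p) / tofrac ('X^m : {poly rat}).

Definition inAq (F : {poly Kq}) : Prop := forall n : nat, laurent F.[qnat n].

Definition Bq (k : nat) : {poly Kq} :=
  (qfact k)^-1 *: \prod_(j < k) ((qnat j.+1)%:P + qq ^+ j.+1 *: 'X).

(* Main.v *)
Require Import Defs.
From HB Require Import structures.
From mathcomp Require Import all_boot all_order all_algebra fraction.
From mathcomp Require Import ring.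
Import Order.TTheory GRing.Theory Num.Theory.
Local Open Scope ring_scope.


Lemma gen_shift (F : fieldType) (q a b: F) : q - 1 != 0 ->
  (a - 1) / (q - 1) + a * ((b - 1) / (q - 1)) = (b * a - 1) / (q - 1).
Proof. move=> h; field. exact h. Qed.

Lemma gen_rec (F : fieldType) (q X Y Fk P : F) : q - 1 != 0 -> Y - 1 != 0 -> Fk != 0 ->
  (Fk * ((Y - 1) / (q - 1)))^-1 * (P * ((X * Y - 1) / (q - 1))) =
  (Fk * ((Y - 1) / (q - 1)))^-1 * ((X - 1) / (q - 1) * P) + X * (Fk^-1 * P).
Proof. move=> h1 h2 h3; field. by rewrite h1 h2 h3. Qed.

Lemma qXn1_neq0 m : (0 < m)%N -> qq ^+ m - 1 != 0.
Proof.
move=> m0; rewrite /qq -tofracXn -tofrac1 -tofracB tofrac_eq0.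
by rewrite -size_poly_eq0 -polyC1 size_XnsubC.
Qed.

Lemma qq_neq0 : qq != 0.
Proof. by rewrite /qq tofrac_eq0 -size_poly_eq0 size_polyX. Qed.

Lemma q1_neq0 : qq - 1 != 0.
Proof. by have := @qXn1_neq0 1 isT; rewrite expr1. Qed.

Lemma qnat_neq0 m : (0 < m)%N -> qnat m != 0.
Proof. by move=> m0; rewrite /qnat mulf_neq0 ?invr_eq0 ?qXn1_neq0 ?q1_neq0. Qed.

Lemma qfact_neq0 k : qfact k != 0.
Proof. by rewrite /qfact; apply/prodf_neq0 => i _; apply: qnat_neq0. Qed.

Lemma qnat_shift j n : qnat j.+1 + qq ^+ j.+1 * qnat n = qnat (n + j.+1).
Proof. by rewrite /qnat exprD gen_shift // q1_neq0. Qed.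

Lemma qnat0 : qnat 0 = 0.
Proof. by rewrite /qnat expr0 subrr mul0r. Qed.

Definition beta n k := (Bq k).[qnat n].

Lemma betaE n k : beta n k = (qfact k)^-1 * \prod_(j < k) qnat (n + j.+1).
Proof.
rewrite /beta /Bq hornerZ horner_prod; congr (_ * _); apply: eq_bigr => j _.
by rewrite hornerD hornerC hornerZ hornerX qnat_shift.
Qed.

Lemma beta_n0 n : beta n 0 = 1.
Proof. by rewrite betaE big_ord0 /qfact big_ord0 invr1 mulr1. Qed.

Lemma beta_0k k : beta 0 k = 1.
Proof.
rewrite betaE; under eq_bigr do rewrite add0n.
by rewrite mulVf // qfact_neq0.
Qed.

Lemma beta_rec n k : beta n.+1 k.+1 = beta n k.+1 + qq ^+ n.+1 * beta n.+1 k.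
Proof.
rewrite !betaE big_ord_recr big_ord_recl /=.
have -> : \prod_(i < k) qnat (n + (bump 0 i).+1) = \prod_(i < k) qnat (n.+1 + i.+1).
  by apply: eq_bigr => i _; rewrite /bump /= add1n addSnnS.
set P := \prod_(i < k) _.
have -> : qfact k.+1 = qfact k * qnat k.+1 by rewrite /qfact big_ord_recr.
rewrite addn1 {1 2}/qnat exprD.
apply: gen_rec; [exact: q1_neq0 | exact: qXn1_neq0 | exact: qfact_neq0].
Qed.

Definition iota (p : {poly int}) : Kq := tofrac (map_poly (intr : int -> rat) p).

Lemma iotaD p1 p2 : iota (p1 + p2) = iota p1 + iota p2.
Proof. by rewrite /iota rmorphD tofracD. Qed.
Lemma iotaM p1 p2 : iota (p1 * p2) = iota p1 * iota p2.
Proof. by rewrite /iota rmorphM tofracM. Qed.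
Lemma iotaN p : iota (- p) = - iota p.
Proof. by rewrite /iota rmorphN tofracN. Qed.
Lemma iotaXn m : iota 'X^m = qq ^+ m.
Proof. by rewrite /iota map_polyXn tofracXn. Qed.
Lemma iota1 : iota 1 = 1.
Proof. by rewrite /iota rmorph1 tofrac1. Qed.

Lemma qXn_neq0 m : qq ^+ m != 0.
Proof. by rewrite expf_neq0 // qq_neq0. Qed.

Lemma laurentP r : laurent r <-> exists p m, r * qq ^+ m = iota p.
Proof.
split.
  case=> p [m ->]; exists p, m; rewrite tofracXn -/qq divfK //; exact: qXn_neq0.
case=> p [m h]; exists p, m; rewrite tofracXn -/qq -/(iota p) -h mulfK //.
exact: qXn_neq0.
Qed.

Lemma L_add x y : laurent x -> laurent y -> laurent (x + y).
Proof.
move=> /laurentP [p1 [m1 h1]] /laurentP [p2 [m2 h2]]; apply/laurentP.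
exists (p1 * 'X^m2 + p2 * 'X^m1), (m1 + m2)%N.
rewrite iotaD !iotaM !iotaXn -h1 -h2 exprD; ring.
Qed.

Lemma L_mul x y : laurent x -> laurent y -> laurent (x * y).
Proof.
move=> /laurentP [p1 [m1 h1]] /laurentP [p2 [m2 h2]]; apply/laurentP.
exists (p1 * p2), (m1 + m2)%N.
rewrite iotaM -h1 -h2 exprD; ring.
Qed.

Lemma L_opp x : laurent x -> laurent (- x).
Proof.
move=> /laurentP [p1 [m1 h1]]; apply/laurentP.
by exists (- p1), m1; rewrite iotaN -h1 mulNr.
Qed.

Lemma L_sub x y : laurent x -> laurent y -> laurent (x - y).
Proof. by move=> hx hy; apply: L_add => //; apply: L_opp. Qed.

Lemma L_q n : laurent (qq ^+ n).
Proof. by apply/laurentP; exists 'X^n, 0%N; rewrite expr0 mulr1 iotaXn. Qed.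

Lemma L_qinv n : laurent (qq ^+ n)^-1.
Proof.
apply/laurentP; exists 1, n; rewrite iota1 mulVf //; exact: qXn_neq0.
Qed.

Lemma L_0 : laurent 0.
Proof. by apply/laurentP; exists 0, 0%N; rewrite mul0r /iota rmorph0 tofrac0. Qed.

Lemma L_1 : laurent 1.
Proof. by apply/laurentP; exists 1, 0%N; rewrite mulr1 iota1. Qed.

Lemma beta_laurent n k : laurent (beta n k).
Proof.
elim: k n => [|k IHk] n; first by rewrite beta_n0; exact: L_1.
elim: n => [|n IHn]; first by rewrite beta_0k; exact: L_1.
by rewrite beta_rec; apply: L_add => //; apply: L_mul => //; apply: L_q.
Qed.


Lemma bump0 i : bump 0 i = i.+1.
Proof. by rewrite /bump add1n. Qed.

Lemma key (S : Kq -> Prop) (S0 : S 0)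
  (Sadd : forall x y, S x -> S y -> S (x + y))
  (Sopp : forall x, S x -> S (- x))
  (Smul : forall x y, S x -> laurent y -> S (x * y)) N :
  forall a (c : nat -> Kq), (forall n, (a <= n)%N -> S (\sum_(k < N) c k * beta n k)) ->
  forall k, (k < N)%N -> S (c k).
Proof.
have Ssum : forall (M : nat) (g : nat -> Kq), (forall k, (k < M)%N -> S (g k)) -> S (\sum_(k < M) g k).
  by move=> M g hg; apply: (big_ind S) => // i _; apply: hg.
elim: N => [|N IH] a c h k hk; first by [].
have hd : forall k, (k < N)%N -> S (c k.+1).
  apply: (IH a.+1 (fun k => c k.+1)) => n hn.
  case: n hn => [//|m] hm.
  have e : \sum_(k < N) c k.+1 * beta m.+1 k = (qq ^+ m.+1)^-1 *
     (\sum_(k < N.+1) c k * beta m.+1 k - \sum_(k < N.+1) c k * beta m k).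
    rewrite !big_ord_recl !beta_n0.
    under [X in _ = _ * (_ + X - _)]eq_bigr do rewrite lift0 beta_rec mulrDr.
    under [X in _ = _ * (_ - (_ + X))]eq_bigr do rewrite lift0.
    rewrite big_split /=.
    set A := \sum_(i < N) c i.+1 * beta m i.+1.
    set B := \sum_(i < N) c i.+1 * (qq ^+ m.+1 * beta m.+1 i).
    have -> : c 0%N * 1 + (A + B) - (c 0%N * 1 + A) = B by ring.
    rewrite /B.
    under [X in _ = _ * X]eq_bigr do rewrite mulrCA.
    rewrite -mulr_sumr mulKf //; exact: qXn_neq0.
  rewrite e mulrC; apply: (Smul _ _ _ (L_qinv _)).
  apply: Sadd; first exact: h (ltnW hm).
  by apply: Sopp; apply: h.
case: k hk => [|k] hk; last exact: hd.
have e : c 0%N = \sum_(k < N.+1) c k * beta a k - \sum_(k < N) c k.+1 * beta a k.+1.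
  by rewrite big_ord_recl beta_n0 mulr1; under eq_bigr do rewrite lift0; rewrite addrK.
rewrite e; apply: (Sadd _ _ (h a (leqnn a))).
apply: Sopp; apply: (Ssum N (fun k => c k.+1 * beta a k.+1)) => i hi.
apply: Smul; [exact: hd | exact: beta_laurent].
Qed.


Lemma size_lin j : size ((qnat j.+1)%:P + qq ^+ j.+1 *: 'X) = 2%N.
Proof.
rewrite addrC -mul_polyC size_MXaddC polyC_eq0 (negbTE (qXn_neq0 _)) /=.
by rewrite size_polyC qXn_neq0.
Qed.

Lemma size_prodB k : size (\prod_(j < k) ((qnat j.+1)%:P + qq ^+ j.+1 *: 'X)) = k.+1.
Proof.
elim: k => [|k IH]; first by rewrite big_ord0 size_poly1.
rewrite big_ord_recr /= size_mul ?IH ?size_lin ?addn2 //.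
  by rewrite -size_poly_eq0 IH.
by rewrite -size_poly_eq0 size_lin.
Qed.

Lemma size_Bq k : size (Bq k) = k.+1.
Proof. by rewrite /Bq size_scale ?size_prodB // invr_eq0 qfact_neq0. Qed.

Lemma spanB d (F : {poly Kq}) : (size F <= d)%N ->
  exists c : nat -> Kq, F = \sum_(k < d) c k *: Bq k.
Proof.
elim: d F => [|d IH] F hF.
  by exists (fun _ => 0); rewrite big_ord0; apply/eqP; rewrite -size_poly_eq0 -leqn0.
set c0 := F`_d / (Bq d)`_d.
have hB : (Bq d)`_d != 0.
  have e : (Bq d)`_d = lead_coef (Bq d) by rewrite lead_coefE size_Bq.
  by rewrite e lead_coef_eq0 -size_poly_eq0 size_Bq.
have hG : (size (F - c0 *: Bq d)%R <= d)%N.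
  apply/leq_sizeP => j hj; rewrite coefB coefZ.
  case: (ltngtP j d) hj => // [hjd _|-> _]; last by rewrite /c0 divfK // subrr.
  have /leq_sizeP -> := hF; last by [].
  have /leq_sizeP -> : (size (Bq d) <= d.+1)%N by rewrite size_Bq.
    by rewrite mulr0 subrr.
  by [].
have [c hc] := IH _ hG.
exists (fun k => if k == d then c0 else c k).
rewrite big_ord_recr /= eqxx.
under eq_bigr => i _ do rewrite (ltn_eqF (ltn_ord i)).
by rewrite -hc subrK.
Qed.


Lemma eval_sum N (c : nat -> Kq) n :
  (\sum_(k < N) c k *: Bq k).[qnat n] = \sum_(k < N) c k * beta n k.
Proof. by rewrite horner_sum; apply: eq_bigr => i _; rewrite hornerZ. Qed.

Theorem mainTheorem10 :
  (* each B_k lies in A_q *)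
  (forall k : nat, inAq (Bq k)) /\
  (* linear independence over Z[q,q^-1] *)
  (forall (n : nat) (c : nat -> Kq),
      (forall k, laurent (c k)) ->
      \sum_(k < n) c k *: Bq k = 0 ->
      forall k, (k < n)%N -> c k = 0) /\
  (* spanning: every element of A_q is a Z[q,q^-1]-combination of the B_k *)
  (forall F : {poly Kq}, inAq F ->
      exists (n : nat) (c : nat -> Kq),
        (forall k, laurent (c k)) /\ F = \sum_(k < n) c k *: Bq k).
Proof.
split; first by move=> k n; exact: beta_laurent.
split.
  move=> N c _ h k hk.
  apply: (@key (fun x => x = 0) erefl _ _ _ N 0%N c) => //.
  - by move=> x y -> ->; rewrite addr0.
  - by move=> x ->; rewrite oppr0.
  - by move=> x y -> _; rewrite mul0r.
  - by move=> n _; rewrite -eval_sum h horner0.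
move=> F hF.
have [c hc] := @spanB (size F) F (leqnn _).
have hl : forall k, (k < size F)%N -> laurent (c k).
  apply: (@key laurent L_0 L_add L_opp L_mul (size F) 0%N c).
  by move=> n _; rewrite -eval_sum -hc; apply: hF.
exists (size F), (fun k => if (k < size F)%N then c k else 0); split.
  by move=> k; case: ifP => hk; [exact: hl | exact: L_0].
by rewrite {1}hc; apply: eq_bigr => i _; rewrite ltn_ord.
Qed.
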